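(* Let $\Lambda=[\lambda_{\min},\lambda_{\max}]$, $F\in C^2(\Lambda)$, let $\lambda_b\in\{\lambda_{\min},\lambda_{\max}\}$ and let $\lambda_0=\lambda_b$, $\lambda_1,\lambda_2$ be the boundary node and the next two grid nodes moving into the interior, with $h_0=|\lambda_1-\lambda_0|$, $h_1=|\lambda_2-\lambda_1|$ and $h=\max(h_0,h_1)$. Let $d_0=\frac{F(\lambda_1)-F(\lambda_0)}{\lambda_1-\lambda_0}$, $d_1=\frac{F(\lambda_2)-F(\lambda_1)}{\lambda_2-\lambda_1}$, and let $m_b$ be the Fritsch–Carlson boundary slope: $m_b=\frac{(2h_0+h_1)d_0-h_0d_1}{h_0+h_1}$ if $d_0d_1>0$ and $m_b=0$ if $d_0d_1\le0$. Then $$|m_b-F'(\lambda_b)|\le C\,h\,\|F''\|_{\infty,\Lambda}$$ for a constant $C$ depending only on mesh regularity.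
   Context: $\|g\|_{\infty,\Lambda}=\sup_{\lambda\in\Lambda}|g(\lambda)|$. ''Mesh regularity'' refers to bounds on the ratios of neighbouring grid steps. *)

(* Defs.v *)
From Stdlib Require Import Reals Lra.
From Coquelicot Require Import Coquelicot.
Open Scope R_scope.

Definition deriv_on (a b : R) (f f' : R -> R) : Prop :=
  forall x, a <= x <= b ->
    filterlim (fun y => (f y - f x) / (y - x))
      (within (fun y => a <= y <= b /\ y <> x) (locally x))
      (locally (f' x)).

Definition continuous_on_cc (a b : R) (g : R -> R) : Prop :=
  forall x, a <= x <= b ->
    filterlim g (within (fun y => a <= y <= b) (locally x)) (locally (g x)).

Definition C2_on (a b : R) (F F1 F2 : R -> R) : Prop :=
  deriv_on a b F F1 /\ deriv_on a b F1 F2 /\ continuous_on_cc a b F2.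

(* ||g||_{oo,[a,b]} = sup_{x in [a,b]} |g x| (as a real; finite for
   continuous g on a compact interval). *)
Definition sup_norm (a b : R) (g : R -> R) : R :=
  real (Lub_Rbar (fun y => exists x, a <= x <= b /\ y = Rabs (g x))).

Definition fc_boundary_slope (h0 h1 d0 d1 : R) : R :=
  if Rlt_dec 0 (d0 * d1)
  then ((2 * h0 + h1) * d0 - h0 * d1) / (h0 + h1)
  else 0.

(* Main.v *)
Require Import Defs.
From Stdlib Require Import Reals Lra.
From Coquelicot Require Import Coquelicot.
Open Scope R_scope.

Definition clamp (a b x : R) := Rmax a (Rmin b x).

Lemma clamp_in a b x : a <= b -> a <= clamp a b x <= b.
Proof. intros; unfold clamp, Rmax, Rmin; repeat destruct Rle_dec; lra. Qed.

Lemma clamp_id a b x : a <= x <= b -> clamp a b x = x.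
Proof. intros; unfold clamp, Rmax, Rmin; repeat destruct Rle_dec; lra. Qed.

Lemma clamp_lip a b x y : a <= b -> Rabs (clamp a b y - clamp a b x) <= Rabs (y - x).
Proof.
  intros; unfold clamp, Rmax, Rmin; repeat destruct Rle_dec;
  unfold Rabs; repeat destruct Rcase_abs; lra.
Qed.

Definition cont_ed (a b : R) (g : R -> R) :=
  forall x, a <= x <= b -> forall eps, 0 < eps -> exists d, 0 < d /\
    forall y, a <= y <= b -> Rabs (y - x) < d -> Rabs (g y - g x) < eps.

Lemma deriv_ed a b f f' : deriv_on a b f f' -> forall x, a <= x <= b ->
  forall eps, 0 < eps -> exists d, 0 < d /\ forall y, a <= y <= b -> y <> x ->
    Rabs (y - x) < d -> Rabs ((f y - f x) / (y - x) - f' x) < eps.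
Proof.
  intros H x Hx eps He.
  assert (L : locally (f' x) (fun z => Rabs (z - f' x) < eps)).
  { exists (mkposreal eps He); intros z Hz; exact Hz. }
  specialize (H x Hx _ L). destruct H as [d Hd].
  exists d; split; [apply cond_pos|].
  intros y Hy Hyx Hd'. apply (Hd y); [exact Hd' | split; assumption].
Qed.

Lemma cont_cc_ed a b g : continuous_on_cc a b g -> cont_ed a b g.
Proof.
  intros H x Hx eps He.
  assert (L : locally (g x) (fun z => Rabs (z - g x) < eps)).
  { exists (mkposreal eps He); intros z Hz; exact Hz. }
  specialize (H x Hx _ L). destruct H as [d Hd].
  exists d; split; [apply cond_pos|].
  intros y Hy Hd'. apply (Hd y); [exact Hd' | assumption].
Qed.

Lemma deriv_cont a b f f' : deriv_on a b f f' -> cont_ed a b f.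
Proof.
  intros H x Hx eps He.
  destruct (deriv_ed a b f f' H x Hx 1 Rlt_0_1) as [d [Hd Hy]].
  set (K := Rabs (f' x) + 1).
  assert (HK : 0 < K) by (unfold K; pose proof (Rabs_pos (f' x)); lra).
  exists (Rmin d (eps / K)); split.
  { apply Rmin_glb_lt; [lra| apply Rdiv_lt_0_compat; lra]. }
  intros y Hyab Hyx.
  destruct (Req_dec y x) as [->|Hne].
  { unfold Rminus; rewrite Rplus_opp_r, Rabs_R0; lra. }
  assert (H1 : Rabs (y - x) < d) by (eapply Rlt_le_trans; [exact Hyx| apply Rmin_l]).
  assert (H2 : Rabs (y - x) < eps / K) by (eapply Rlt_le_trans; [exact Hyx| apply Rmin_r]).
  specialize (Hy y Hyab Hne H1).
  assert (Hq : Rabs ((f y - f x) / (y - x)) <= K).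
  { unfold K. pose proof (Rabs_triang ((f y - f x) / (y - x) - f' x) (f' x)).
    replace ((f y - f x) / (y - x) - f' x + f' x) with ((f y - f x) / (y - x)) in H0 by ring.
    lra. }
  replace (f y - f x) with ((f y - f x) / (y - x) * (y - x)) by (field; lra).
  rewrite Rabs_mult.
  assert (Hp : 0 < Rabs (y - x)) by (apply Rabs_pos_lt; lra).
  apply Rle_lt_trans with (K * Rabs (y - x)).
  { apply Rmult_le_compat_r; lra. }
  apply Rmult_lt_reg_r with (/ K). apply Rinv_0_lt_compat; lra.
  replace (K * Rabs (y - x) * / K) with (Rabs (y - x)) by (field; lra).
  exact H2.
Qed.

Lemma clamp_cont a b g : a <= b -> cont_ed a b g -> forall x,
  continuity_pt (fun t => g (clamp a b t)) x.
Proof.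
  intros Hab H x eps He.
  destruct (H (clamp a b x) (clamp_in a b x Hab) eps He) as [d [Hd Hy]].
  exists d; split; [exact Hd|].
  intros y [_ Hyx]. simpl. unfold R_dist in *.
  apply Hy. apply clamp_in; exact Hab.
  eapply Rle_lt_trans; [apply clamp_lip; exact Hab| exact Hyx].
Qed.

Lemma clamp_deriv a b f f' : deriv_on a b f f' -> forall x, a < x < b ->
  is_derive (fun t => f (clamp a b t)) x (f' x).
Proof.
  intros H x Hx. apply is_derive_Reals. intros eps He.
  destruct (deriv_ed a b f f' H x ltac:(lra) eps He) as [d [Hd Hy]].
  assert (Hp : 0 < Rmin d (Rmin (x - a) (b - x))).
  { repeat apply Rmin_glb_lt; lra. }
  exists (mkposreal _ Hp). intros k Hk Hka. simpl in Hka.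
  assert (k1 : Rabs k < d) by (eapply Rlt_le_trans; [exact Hka| apply Rmin_l]).
  assert (k2 : Rabs k < Rmin (x - a) (b - x)) by (eapply Rlt_le_trans; [exact Hka| apply Rmin_r]).
  assert (k3 : Rabs k < x - a) by (eapply Rlt_le_trans; [exact k2| apply Rmin_l]).
  assert (k4 : Rabs k < b - x) by (eapply Rlt_le_trans; [exact k2| apply Rmin_r]).
  assert (Hk' : - Rabs k <= k <= Rabs k) by (unfold Rabs; destruct Rcase_abs; lra).
  rewrite (clamp_id a b (x + k)) by lra.
  rewrite (clamp_id a b x) by lra.
  specialize (Hy (x + k) ltac:(lra) ltac:(lra)).
  replace (x + k - x) with k in Hy by ring. apply Hy. exact k1.
Qed.

Lemma mvt a b f f' : a <= b -> deriv_on a b f f' -> forall u v,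
  a <= u <= b -> a <= v <= b ->
  exists c, Rmin u v <= c <= Rmax u v /\ f v - f u = f' c * (v - u).
Proof.
  intros Hab H u v Hu Hv.
  destruct (MVT_gen (fun t => f (clamp a b t)) u v f') as [c [Hc Heq]].
  - intros x Hx. apply (clamp_deriv a b f f' H).
    unfold Rmin, Rmax in Hx; destruct Rle_dec in Hx; lra.
  - intros x _. apply clamp_cont; [exact Hab|]. eapply deriv_cont; exact H.
  - exists c; split; [exact Hc|].
    rewrite (clamp_id a b v) in Heq by lra. rewrite (clamp_id a b u) in Heq by lra.
    exact Heq.
Qed.

Lemma sup_bound a b g : a <= b -> cont_ed a b g -> forall c, a <= c <= b ->
  Rabs (g c) <= sup_norm a b g.
Proof.
  intros Hab H c Hc.
  assert (Ha : cont_ed a b (fun t => Rabs (g t))).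
  { intros x Hx eps He. destruct (H x Hx eps He) as [d [Hd Hy]].
    exists d; split; [exact Hd|]. intros y Hy1 Hy2.
    eapply Rle_lt_trans; [apply Rabs_triang_inv2| apply Hy; assumption]. }
  destruct (continuity_ab_maj (fun t => Rabs (g (clamp a b t))) a b Hab
     (fun c _ => clamp_cont a b _ Hab Ha c)) as [Mx [HM HMx]].
  set (B := Rabs (g (clamp a b Mx))) in *.
  unfold sup_norm.
  set (E := fun y => exists x, a <= x <= b /\ y = Rabs (g x)).
  destruct (Lub_Rbar_correct E) as [ub lub].
  assert (HB : Rbar_le (Lub_Rbar E) (Finite B)).
  { apply lub. intros y [x [Hx ->]]. simpl.
    specialize (HM x Hx). rewrite (clamp_id a b x Hx) in HM. exact HM. }
  assert (Hc' : Rbar_le (Finite (Rabs (g c))) (Lub_Rbar E)).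
  { apply ub. exists c; split; [exact Hc| reflexivity]. }
  destruct (Lub_Rbar E); simpl in *; try contradiction; exact Hc'.
Qed.

Lemma abs_aux x y : Rabs x <= Rabs (x - y) + Rabs y.
Proof. unfold Rabs; repeat destruct Rcase_abs; lra. Qed.

Lemma sign_aux x y : x * y <= 0 -> Rabs x <= Rabs (x - y).
Proof.
  intros H. unfold Rabs; repeat destruct Rcase_abs; nra.
Qed.

Theorem mainTheorem14 :
  forall rho : R, 1 <= rho ->
  exists C : R, 0 <= C /\
  forall (lmin lmax : R) (F F1 F2 : R -> R) (l0 l1 l2 : R),
    C2_on lmin lmax F F1 F2 ->
    ((l0 = lmin /\ l0 < l1 /\ l1 < l2 /\ l2 <= lmax) \/
     (l0 = lmax /\ l0 > l1 /\ l1 > l2 /\ l2 >= lmin)) ->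
    let h0 := Rabs (l1 - l0) in
    let h1 := Rabs (l2 - l1) in
    h0 <= rho * h1 -> h1 <= rho * h0 ->
    let h := Rmax h0 h1 in
    let d0 := (F l1 - F l0) / (l1 - l0) in
    let d1 := (F l2 - F l1) / (l2 - l1) in
    Rabs (fc_boundary_slope h0 h1 d0 d1 - F1 l0)
      <= C * h * sup_norm lmin lmax F2.
Proof.
  intros rho Hrho. exists 3. split; [lra|].
  intros lmin lmax F F1 F2 l0 l1 l2 [HF [HF1 HF2]] Hcase h0 h1 Hr1 Hr2 h d0 d1.
  assert (Hab : lmin <= lmax) by lra.
  assert (I0 : lmin <= l0 <= lmax) by lra.
  assert (I1 : lmin <= l1 <= lmax) by lra.
  assert (I2 : lmin <= l2 <= lmax) by lra.
  set (M := sup_norm lmin lmax F2).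
  assert (HM : forall c, lmin <= c <= lmax -> Rabs (F2 c) <= M).
  { intros c Hc. apply sup_bound; [exact Hab| apply cont_cc_ed; exact HF2| exact Hc]. }
  assert (M0 : 0 <= M) by (eapply Rle_trans; [apply Rabs_pos| apply (HM l0 I0)]).
  assert (Lip : forall x y, lmin <= x <= lmax -> lmin <= y <= lmax ->
            Rabs (F1 x - F1 y) <= M * Rabs (x - y)).
  { intros x y Hx Hy. destruct (mvt _ _ F1 F2 Hab HF1 y x Hy Hx) as [c [Hc Heq]].
    rewrite Heq, Rabs_mult. apply Rmult_le_compat_r; [apply Rabs_pos|].
    apply HM. unfold Rmin, Rmax in Hc; destruct Rle_dec in Hc; lra. }
  destruct (mvt _ _ F F1 Hab HF l0 l1 I0 I1) as [x0 [Hx0 E0]].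
  destruct (mvt _ _ F F1 Hab HF l1 l2 I1 I2) as [x1 [Hx1 E1]].
  assert (N0 : l1 - l0 <> 0) by lra.
  assert (N1 : l2 - l1 <> 0) by lra.
  assert (D0 : d0 = F1 x0) by (unfold d0; rewrite E0; field; exact N0).
  assert (D1 : d1 = F1 x1) by (unfold d1; rewrite E1; field; exact N1).
  assert (Hx0' : lmin <= x0 <= lmax) by (unfold Rmin, Rmax in Hx0; destruct Rle_dec in Hx0; lra).
  assert (Hx1' : lmin <= x1 <= lmax) by (unfold Rmin, Rmax in Hx1; destruct Rle_dec in Hx1; lra).
  assert (G : Rabs (x0 - l0) <= h0 /\ Rabs (x0 - x1) <= h0 + h1 /\ 0 < h0 /\ 0 < h1).
  { unfold h0, h1. unfold Rmin, Rmax in Hx0, Hx1.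
    destruct Rle_dec in Hx0; destruct Rle_dec in Hx1;
    unfold Rabs; repeat destruct Rcase_abs; lra. }
  destruct G as [G1 [G2 [P0 P1]]].
  assert (A : Rabs (d0 - F1 l0) <= M * h0).
  { rewrite D0. eapply Rle_trans; [apply Lip; assumption|].
    apply Rmult_le_compat_l; assumption. }
  assert (B : Rabs (d0 - d1) <= M * (h0 + h1)).
  { rewrite D0, D1. eapply Rle_trans; [apply Lip; assumption|].
    apply Rmult_le_compat_l; assumption. }
  assert (Hh0 : h0 <= h) by apply Rmax_l.
  assert (Hh1 : h1 <= h) by apply Rmax_r.
  fold M.
  unfold fc_boundary_slope. destruct Rlt_dec as [Hp|Hn].
  - replace (((2 * h0 + h1) * d0 - h0 * d1) / (h0 + h1) - F1 l0)
      with ((d0 - F1 l0) + h0 / (h0 + h1) * (d0 - d1)) by (field; lra).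
    eapply Rle_trans; [apply Rabs_triang|]. rewrite Rabs_mult.
    rewrite (Rabs_pos_eq (h0 / (h0 + h1))) by (apply Rlt_le, Rdiv_lt_0_compat; lra).
    assert (Q : h0 / (h0 + h1) * Rabs (d0 - d1) <= M * h0).
    { eapply Rle_trans.
      - apply Rmult_le_compat_l; [apply Rlt_le, Rdiv_lt_0_compat; lra| exact B].
      - right; field; lra. }
    nra.
  - assert (S : Rabs d0 <= Rabs (d0 - d1)) by (apply sign_aux; lra).
    pose proof (abs_aux (0 - F1 l0) (0 - d0)).
    replace (0 - F1 l0 - (0 - d0)) with (d0 - F1 l0) in H by ring.
    replace (0 - d0) with (- d0) in H by ring. rewrite Rabs_Ropp in H.
    nra.
Qed.
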